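(* Let $n,k$ be integers with $2\le 2k\le n-4$. Let $\eta=(\eta_1<\dots<\eta_l)\in\overline{\mathbb{D}}^{\,\mathrm{o}}_{2k+2}$, where $\overline{\mathbb{D}}^{\,\mathrm{o}}_{2k+2}=\mathbb{D}^{\,\mathrm{o}}_{2k+2}\setminus\{(1,2k+1)\}$ if $2k=n-4$ and $\overline{\mathbb{D}}^{\,\mathrm{o}}_{2k+2}=\mathbb{D}^{\,\mathrm{o}}_{2k+2}$ otherwise. Let $Y_{\eta^*}$ be the Young diagram whose main diagonal consists of exactly the cells $c_{1,1},\dots,c_{l+1,l+1}$ and which satisfies $h_{1,1}=2n-5$, $h_{i,i}=\eta_{l-(i-2)}$ for $2\le i\le l+1$, and $a(c_{i,i})=l(c_{i,i})$ for $1\le i\le l+1$. Let $\lambda$ be the partition whose parts are the hook lengths of the first-column cells of $Y_{\eta^*}$. Then $\lambda$ is a partition of $T_{n,n-2k}=n(n+1)/2-(n-2k)$.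
   Context: $\mathbb{D}^{\,\mathrm{o}}_N$ is the set of partitions of $N$ into distinct odd parts, i.e. sequences $(\eta_1<\dots<\eta_l)$ of odd positive integers with sum $N$ and $l\ge 2$. Young diagrams are in English convention: rows top to bottom, columns left to right, $c_{i,j}$ the cell in row $i$, column $j$; arm $a(c_{i,j})$ = number of cells to its right in its row, leg $l(c_{i,j})$ = number of cells below it in its column, hook length $h_{i,j}=a+l+1$. *)

(* Defs.v *)
From mathcomp Require Import all_boot.
Set Implicit Arguments. Unset Strict Implicit. Unset Printing Implicit Defensive.

Definition distinct_odd_partition (N : nat) (eta : seq nat) : bool :=
  [&& sorted ltn eta, all odd eta, sumn eta == N & 2 <= size eta].

Definition Dbar_odd (n k : nat) (eta : seq nat) : bool :=
  distinct_odd_partition (2 * k + 2) eta &&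
  ((2 * k == n - 4) ==> (eta != [:: 1; 2 * k + 1])).

(* A Young diagram is given by its (weakly decreasing, positive) row lengths.
   English convention; rows and columns are 1-indexed. *)
Definition young (mu : seq nat) : bool := sorted geq mu && all (fun r => 0 < r) mu.

(* length of row i (1-indexed); 0 beyond the diagram *)
Definition row (mu : seq nat) (i : nat) : nat := nth 0 mu i.-1.
Definition col (mu : seq nat) (j : nat) : nat := count (fun r => j <= r) mu.

Definition in_diagram (mu : seq nat) (i j : nat) : bool :=
  [&& 1 <= i, 1 <= j & j <= row mu i].

Definition arm (mu : seq nat) (i j : nat) : nat := row mu i - j.
Definition leg (mu : seq nat) (i j : nat) : nat := col mu j - i.
Definition hook (mu : seq nat) (i j : nat) : nat := arm mu i j + leg mu i j + 1.

Definition first_col_hooks (mu : seq nat) : seq nat :=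
  [seq hook mu i 1 | i <- iota 1 (size mu)].

Definition is_partition_of (lam : seq nat) (N : nat) : bool :=
  [&& sorted geq lam, all (fun r => 0 < r) lam & sumn lam == N].

Definition Tnm (n m : nat) : nat := (n * (n + 1)) %/ 2 - m.

Definition Y_eta_star (n : nat) (eta mu : seq nat) : Prop :=
  let l := size eta in
  [/\ young mu,
      (forall i, 1 <= i -> in_diagram mu i i = (i <= l.+1)),
      hook mu 1 1 = 2 * n - 5,
      (forall i, 2 <= i <= l.+1 -> hook mu i i = nth 0 eta (l - (i - 2)).-1)
    & (forall i, 1 <= i <= l.+1 -> arm mu i i = leg mu i i)].

(* Main.v *)
Require Import Defs.
From mathcomp Require Import all_boot zify.
Set Implicit Arguments. Unset Strict Implicit. Unset Printing Implicit Defensive.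

Definition step (a0 : nat) (m : seq nat) := a0.+1 :: map S m ++ nseq (a0 - size m) 1.
Fixpoint build (a : seq nat) : seq nat :=
  if a is a0 :: a' then step a0 (build a') else [::].

Definition hd (a : seq nat) := if a is a0 :: _ then a0.+1 else 0.

Lemma size_le_hd a : sorted (fun x y => y < x) a -> size a <= hd a.
Proof.
elim: a => [|a0 a' IH] //= Hp.
have Hs := path_sorted Hp.
case: a' IH Hp Hs => [|a1 a''] IH //= /andP [H01 _] Hs.
have := IH Hs. simpl. lia.
Qed.

Lemma col1_young mu : young mu -> col mu 1 = size mu.
Proof. case/andP=> _ Hp; rewrite /col; apply/eqP; rewrite -all_count. done. Qed.

Lemma path_nseq1 x k : path geq x.+1 (nseq k 1).
Proof. elim: k x => [|k IH] x //=. Qed.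

Lemma build_props a : sorted (fun x y => y < x) a ->
  let mu := build a in
  [/\ young mu, size mu = hd a, row mu 1 = hd a,
      (forall i, 1 <= i -> in_diagram mu i i = (i <= size a))
    & (forall i, 1 <= i <= size a -> arm mu i i = nth 0 a i.-1 /\ leg mu i i = nth 0 a i.-1)].
Proof.
elim: a => [|a0 a' IH] Hs.
  split => //= i Hi; first by rewrite /in_diagram /row nth_nil; lia.
  lia.
have Hs' := path_sorted Hs.
have [Hy Hsz Hr1 Hd Hal] := IH Hs'.
have Hsa' := size_le_hd Hs'.
have -> : build (a0 :: a') = step a0 (build a') by [].
move: Hy Hsz Hr1 Hd Hal; move: (build a') => m Hy Hsz Hr1 Hd Hal.
have Hma0 : size m <= a0.
  rewrite Hsz. move: Hs; case: (a') => [|a1 a''] //= /andP [] //.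
have Hrow : forall j, row (step a0 m) j.+2 = if j < size m then (row m j.+1).+1 else (j < a0 : nat).
  move=> j; rewrite /row /= nth_cat size_map.
  case: ifP => Hj; first by rewrite (nth_map 0).
  rewrite nth_nseq. have -> : (j - size (m) < a0 - size (m)) = (j < a0) by move: Hj Hma0; lia. by case: (j < a0).
have Hcol : forall j, col (step a0 m) j.+2 = (j < a0) + col m j.+1.
  move=> j; rewrite /col /= count_cat count_map count_nseq /=.
  rewrite mul0n addn0; done.
have Hsize : size (step a0 m) = a0.+1.
  rewrite /= size_cat size_map size_nseq; lia.
have Hyng : young (step a0 m).
  case/andP: Hy => Hsort Hpos.
  apply/andP; split.
    rewrite /= cat_path; apply/andP; split.
      rewrite path_map. move: Hsort Hr1; rewrite /row.
      case: (m) => [|x m'] //= -> ->. rewrite andbT; lia.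
    rewrite last_map; exact: path_nseq1.
  rewrite /= all_cat all_map; apply/andP; split.
    by apply/allP.
  by apply/allP => x /nseqP [->].
split => //.
- move=> i Hi.
  case: i Hi => [|[|j]] Hi //.
  rewrite /in_diagram Hrow /=.
  case: ifP => Hj.
  + have := Hd j.+1 isT. rewrite /in_diagram /=. by [].
  + have : j.+2 <= (j < a0 : nat) = false by case: (j < a0).
    move=> ->. symmetry. apply/negbTE. lia.
- move=> i /andP [Hi Hia].
  case: i Hi Hia => [|[|j]] Hi Hia //.
    rewrite /arm /leg col1_young // Hsize /row /=. lia.
  have Hj : j < size m by simpl in Hia; lia.
  have [Ha Hl] := Hal j.+1 (ltac:(simpl in Hia; lia)).
  rewrite /arm /leg Hrow Hcol Hj /=.
  rewrite /arm in Ha; rewrite /leg in Hl.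
  have Hja0 : j < a0 by simpl in Hia; lia.
  rewrite Hja0 /=. simpl in Ha, Hl. split; lia.
Qed.

Lemma sum_le_min x d : \sum_(1 <= j < d.+1) (j <= x : nat) = minn x d.
Proof.
elim: d => [|d IH]; first by rewrite big_geq //; lia.
rewrite big_nat_recr //= IH. case: leqP => H; lia.
Qed.

Lemma sumn_count s d : all (fun x => x <= d) s ->
  sumn s = \sum_(1 <= j < d.+1) count (fun x => j <= x) s.
Proof.
elim: s => [|x s IH] /=; first by rewrite big1.
case/andP => Hx Hs. rewrite big_split /= -IH // sum_le_min. lia.
Qed.

Lemma sumn_rows mu : sumn mu = \sum_(1 <= i < (size mu).+1) row mu i.
Proof.
rewrite sumnE (big_nth 0) big_add1.
by apply: eq_big_nat => i _; rewrite /row.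
Qed.

Lemma sum_double d : \sum_(1 <= i < d.+1) i.*2 = d * d.+1.
Proof.
elim: d => [|d IH]; first by rewrite big_geq.
rewrite big_nat_recr //= IH. lia.
Qed.

Lemma young_row_mono mu i j : young mu -> 1 <= i <= j -> row mu j <= row mu i.
Proof.
case/andP => Hs _ /andP [Hi Hij]. rewrite /row.
case: (ltnP j.-1 (size mu)) => Hj.
  apply: (sorted_leq_nth (leT := geq)) => //.
  - move=> x y z /= H1 H2; lia.
  - move=> x /=; lia.
  - rewrite inE; lia.
  - lia.
by rewrite nth_default.
Qed.

Lemma diag_sum mu d : young mu -> 1 <= d -> d <= row mu d -> row mu d.+1 <= d ->
  sumn mu = \sum_(1 <= i < d.+1) hook mu i i.
Proof.
move=> Hy Hd1 Hdd Hd1d.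
have Hsz : d <= size mu.
  case: (leqP d (size mu)) => // H. move: Hdd; rewrite /row nth_default; lia.
set t := take d mu. set r := drop d mu.
have Hst : size t = d by rewrite size_takel.
have Hsplit : sumn mu = sumn t + sumn r by rewrite -{1}(cat_take_drop d mu) sumn_cat.
have Hr : all (fun x => x <= d) r.
  apply/(all_nthP 0) => p Hp. rewrite nth_drop.
  have := young_row_mono (i := d.+1) (j := (d + p).+1) Hy. rewrite /row /=.
  move=> H; apply: leq_trans (H _) Hd1d; lia.
have Ht : all (fun x => d <= x) t.
  apply/(all_nthP 0) => p Hp. rewrite nth_take; last lia.
  have := young_row_mono (i := p.+1) (j := d) Hy. rewrite /row /=.
  move=> H; apply: leq_trans Hdd (H _); lia.
have Hcol : forall i, 1 <= i <= d -> col mu i = d + count (fun x => i <= x) r.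
  move=> i Hi. rewrite /col -{1}(cat_take_drop d mu) count_cat -/t -/r.
  congr (_ + _). rewrite -Hst. apply/eqP; rewrite -all_count.
  apply/allP => x Hx. have := allP Ht x Hx. lia.
have Hrow : forall i, 1 <= i <= d -> i <= row mu i.
  move=> i Hi. have := young_row_mono (i := i) (j := d) Hy. lia.
have Hsumt : sumn t = \sum_(1 <= i < d.+1) row mu i.
  rewrite sumn_rows Hst. apply: eq_big_nat => i Hi.
  rewrite /row /t nth_take //; lia.
have Hper : forall i, 1 <= i < d.+1 ->
  hook mu i i + i.*2 = row mu i + count (fun x => i <= x) r + d.+1.
  move=> i Hi. have := Hcol i Hi. have := Hrow i Hi. rewrite /hook /arm /leg. lia.
have E : \sum_(1 <= i < d.+1) (hook mu i i + i.*2) =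
         \sum_(1 <= i < d.+1) (row mu i + count (fun x => i <= x) r + d.+1).
  by apply: eq_big_nat.
rewrite big_split /= sum_double [in RHS]big_split [in RHS]big_split /= -Hsumt -(sumn_count Hr) sum_nat_const_nat in E.
lia.
Qed.

Lemma mem_le_sumn (s : seq nat) y : y \in s -> y <= sumn s.
Proof.
elim: s => [|x s IH] //=; rewrite inE => /orP [/eqP ->|H]; first lia.
have := IH H; lia.
Qed.

Lemma sum_id d : (\sum_(1 <= i < d.+1) i).*2 = d * d.+1.
Proof.
elim: d => [|d IH]; first by rewrite big_geq.
rewrite big_nat_recr //= doubleD IH. lia.
Qed.

Lemma half_odd e : odd e -> (e.-1)./2 + (e.-1)./2 + 1 = e.
Proof. move=> H. have : e %% 2 = 1 by rewrite modn2 H. rewrite -divn2. lia. Qed.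

Lemma sum_rev_eta (eta : seq nat) :
  \sum_(2 <= i < (size eta).+2) nth 0 eta (size eta - (i - 2)).-1 = sumn eta.
Proof.
rewrite [RHS]sumnE [RHS](big_nth 0) big_add1 big_add1 big_nat_rev.
apply: eq_big_nat => i Hi. congr nth. lia.
Qed.

Theorem proposition4p10 (n k : nat) (eta : seq nat) :
  2 <= 2 * k -> 2 * k <= n - 4 ->
  Dbar_odd n k eta ->
  (exists mu, Y_eta_star n eta mu) /\
  (forall mu, Y_eta_star n eta mu ->
     is_partition_of (first_col_hooks mu) (Tnm n (n - 2 * k))).
Proof.
move=> Hk1 Hkn /andP [Hdp _].
case/and4P: Hdp => Hsort Hodd /eqP Hsum Hsz.
set l := size eta.
split.
  pose f := fun e : nat => (e.-1)./2.
  set a := (n - 3) :: map f (rev eta).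
  have Ha : sorted (fun x y => y < x) a.
    rewrite /a /= (path_sortedE (leT := fun x y => y < x)); last first.
      move=> x y z /= H1 H2; lia.
    apply/andP; split.
      rewrite all_map all_rev; apply/allP => y Hy /=.
      have := mem_le_sumn Hy. rewrite Hsum /f -divn2. lia.
    rewrite map_rev rev_sorted.
    apply: (homo_sorted_in (P := odd) (e := ltn)) => //.
    move=> x y Hx Hy /= Hxy. rewrite /f -!divn2.
    have Hx' : odd x := Hx.
    have Hy' : odd y := Hy.
    have : x %% 2 = 1 by rewrite modn2 Hx'.
    have : y %% 2 = 1 by rewrite modn2 Hy'.
    lia.
  have [Hy Hsz' Hr1 Hd Hal] := build_props Ha.
  have Hsa : size a = l.+1 by rewrite /a /= size_map size_rev.
  exists (build a); split => //.
  - by move=> i Hi; rewrite Hd // Hsa.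
  - have [H1 H2] := Hal 1 (ltac:(rewrite Hsa; lia)).
    rewrite /hook H1 H2 /=. lia.
  - move=> [|[|j]] Hi //.
    have Hj : j < l by lia.
    have [H1 H2] := Hal j.+2 (ltac:(rewrite Hsa; lia)).
    rewrite /hook H1 H2 /a /= (nth_map 0) ?size_rev // nth_rev //.
    have -> : (l - (j.+2 - 2)).-1 = l - j.+1 by lia.
    rewrite /f half_odd //. apply: (allP Hodd). apply: mem_nth. move: Hj; rewrite /l => H. rewrite ltn_subrL /=. exact: leq_ltn_trans (leq0n j) H.
  - move=> i Hi. have [H1 H2] := Hal i (ltac:(rewrite Hsa; lia)). by rewrite H1 H2.
move=> mu [Hy Hdiag Hh1 Hhi Hal].
have Hdd : l.+1 <= row mu l.+1.
  have := Hdiag l.+1 isT. rewrite leqnn /in_diagram. by case/and3P.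
have Hdd' : row mu l.+2 <= l.+1.
  have := Hdiag l.+2 isT. rewrite ltnn /in_diagram /=. by case: leqP.
have Hsumn : sumn mu = 2 * n - 5 + 2 * k + 2.
  rewrite (diag_sum Hy _ Hdd Hdd') // big_ltn // Hh1.
  rewrite (eq_big_nat _ _ (F2 := fun i => nth 0 eta (l - (i - 2)).-1)); last first.
    move=> i Hi; apply: Hhi; lia.
  rewrite sum_rev_eta Hsum. lia.
have Hs1 : 1 <= size mu.
  case: (leqP 1 (size mu)) => // H.
  move: Hdd; rewrite /row nth_default; lia.
have Hsmu : size mu = n - 2.
  have := Hal 1 isT. move: Hh1. rewrite /hook /arm /leg col1_young //. lia.
have Hpos := Hy. case/andP: Hpos => _ Hpos.
apply/and3P; split.
- rewrite /first_col_hooks. apply: (homo_sorted (e := leq)); last exact: iota_sorted.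
  move=> x y Hxy /=. rewrite /hook /arm /leg.
  have : row mu y <= row mu x.
    case: x Hxy => [|x] Hxy.
      case: y Hxy => [|y] _ //. rewrite {2}/row /=.
      have := young_row_mono (i := 1) (j := y.+1) Hy. apply. lia.
    apply: young_row_mono => //. lia.
- rewrite /first_col_hooks all_map; apply/allP => i _ /=. rewrite /hook. lia.
rewrite /first_col_hooks sumnE big_map.
have -> : iota 1 (size mu) = index_iota 1 (size mu).+1 by rewrite /index_iota subn1.
rewrite (eq_big_nat _ _ (F2 := fun i => row mu i + (size mu - i))); last first.
  move=> i Hi. rewrite /hook /arm /leg col1_young //.
  have : 0 < row mu i.
    rewrite /row. apply: (allP Hpos). apply: mem_nth. by case: (i) Hi => [|i'] // /andP [_ ].
  lia.
rewrite big_split /= -sumn_rows.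
have HX : \sum_(1 <= i < (size mu).+1) (size mu - i) + \sum_(1 <= i < (size mu).+1) i
          = size mu * size mu.
  rewrite -big_split /= (eq_big_nat _ _ (F2 := fun _ => size mu)); last first.
    move=> i Hi; lia.
  by rewrite sum_nat_const_nat subn1.
have HY := sum_id (size mu).
rewrite /Tnm.
have Hq : (n * (n + 1)) %/ 2 * 2 = n * (n + 1).
  apply: divnK. rewrite dvdn2 oddM addn1 /=. by case: (odd n).
move: HX HY Hq. rewrite Hsmu Hsumn.
set X := \sum_(1 <= i < (n - 2).+1) (n - 2 - i).
set Y := \sum_(1 <= i < (n - 2).+1) i.
set q := (n * (n + 1)) %/ 2.
move=> H1 H2 H3; apply/eqP. clearbody X Y q. nia.
Qed.
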